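(* Let $k\in\mathbb{Z}$. For all positive integers $x,n$, $$(-1)^{x-1}G_{n}^{(k)}(x)+G_{n}^{(k)}=2\sum_{m=1}^{n}\sum_{j=1}^{m}\sum_{i=0}^{x-1}(-1)^{i}i^{n-m}\binom{n}{m}\frac{S_{1}(m,j)}{j^{k-1}}.$$
   Context: Convention: $0^0=1$. For $k\in\mathbb{Z}$, $\mathrm{Ei}_k(x)=\sum_{n=1}^{\infty}\frac{x^n}{n^k(n-1)!}$. The poly-Genocchi polynomials $G_n^{(k)}(x)$ are defined by $\frac{2\,\mathrm{Ei}_k(\log(1+t))}{e^t+1}e^{xt}=\sum_{n=0}^{\infty}G_n^{(k)}(x)\frac{t^n}{n!}$, and $G_n^{(k)}=G_n^{(k)}(0)$. $S_1(n,m)$ are the signed Stirling numbers of the first kind: $\frac{(\log(1+t))^m}{m!}=\sum_{n=m}^{\infty}S_1(n,m)\frac{t^n}{n!}$. *)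

(* Defs.v *)
From mathcomp Require Import all_boot all_order all_algebra.
Set Implicit Arguments. Unset Strict Implicit. Unset Printing Implicit Defensive.
Import Order.TTheory GRing.Theory Num.Theory.
Local Open Scope ring_scope.

Definition fps := nat -> rat.

Definition fps_mul (f g : fps) : fps :=
  fun n => \sum_(i < n.+1) f i * g (n - i)%N.

Definition fps_one : fps := fun n => if n is 0%N then 1 else 0.

Definition fps_pow (f : fps) (m : nat) : fps := iter m (fps_mul f) fps_one.

Definition fps_scale (c : rat) (f : fps) : fps := fun n => c * f n.

Fixpoint fps_inv_list (f : fps) (n : nat) : seq rat :=
  match n with
  | 0%N => [:: (f 0%N)^-1]
  | n'.+1 => let s := fps_inv_list f n' in
      rcons s (- (f 0%N)^-1 * \sum_(i < n'.+1) f i.+1 * nth 0 s (n' - i)%N)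
  end.

Definition fps_inv (f : fps) : fps := fun n => nth 0 (fps_inv_list f n) n.

Definition fps_expx (x : rat) : fps := fun n => x ^+ n / (n`!)%:R.

Definition fps_expt_plus1 : fps := fun n => if n is 0%N then 2 else 1 / (n`!)%:R.

Definition fps_log1p : fps :=
  fun n => if n is 0%N then 0 else (-1) ^+ n.-1 / n%:R.

Definition Ei_coef (k : int) (n : nat) : rat :=
  if n is 0%N then 0 else ((n%:R : rat) ^ k * (n.-1`!)%:R)^-1.

(* Ei_k(log(1+t)) : composition; since log(1+t) has zero constant term,
   only the terms n <= N contribute to the coefficient of t^N. *)
Definition Ei_log1p (k : int) : fps :=
  fun N => \sum_(n < N.+1) Ei_coef k n * fps_pow fps_log1p n N.

Definition polyGenocchi_gf (k : int) (x : rat) : fps :=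
  fps_mul (fps_mul (fps_scale 2 (Ei_log1p k)) (fps_inv fps_expt_plus1))
          (fps_expx x).

Definition polyGenocchi (k : int) (n : nat) (x : rat) : rat :=
  (n`!)%:R * polyGenocchi_gf k x n.

(* signed Stirling numbers of the first kind:
   (log(1+t))^m / m! = sum_n S1(n,m) t^n / n! *)
Definition stirling1 (n m : nat) : rat :=
  (n`!)%:R * fps_pow fps_log1p m n / (m`!)%:R.

(* Main.v *)
Require Import Defs.
From mathcomp Require Import all_boot all_order all_algebra.
From mathcomp Require Import ring zify.
From Stdlib Require Import FunctionalExtensionality.
Set Implicit Arguments. Unset Strict Implicit. Unset Printing Implicit Defensive.
Import Order.TTheory GRing.Theory Num.Theory.
Local Open Scope ring_scope.

Definition agree (n : nat) (f : fps) (p : {poly rat}) :=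
  forall i, (i <= n)%N -> f i = p`_i.

Definition tr (f : fps) (n : nat) : {poly rat} := \poly_(i < n.+1) f i.

Lemma agree_tr f n : agree n f (tr f n).
Proof. by move=> i hi; rewrite coef_poly ltnS hi. Qed.

Lemma agreeM n f g p q : agree n f p -> agree n g q -> agree n (fps_mul f g) (p * q).
Proof.
move=> hf hg i hi; rewrite coefM /fps_mul; apply: eq_bigr => j _.
have hj := ltn_ord j.
rewrite hf ?hg //; lia.
Qed.

Lemma fps_mulC f g : fps_mul f g = fps_mul g f.
Proof.
apply: functional_extensionality => n.
rewrite (agreeM (@agree_tr f n) (@agree_tr g n) (leqnn n)).
by rewrite mulrC -(agreeM (@agree_tr g n) (@agree_tr f n) (leqnn n)).
Qed.

Lemma fps_mulA f g h : fps_mul f (fps_mul g h) = fps_mul (fps_mul f g) h.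
Proof.
apply: functional_extensionality => n.
rewrite (agreeM (@agree_tr f n) (agreeM (@agree_tr g n) (@agree_tr h n)) (leqnn n)).
by rewrite mulrA -(agreeM (agreeM (@agree_tr f n) (@agree_tr g n)) (@agree_tr h n) (leqnn n)).
Qed.

Lemma fps_mul1 f : fps_mul fps_one f = f.
Proof.
apply: functional_extensionality => n.
rewrite /fps_mul big_ord_recl /= mul1r subn0 big1 ?addr0 // => i _.
by rewrite mul0r.
Qed.

Definition fps_add (f g : fps) : fps := fun n => f n + g n.

Lemma fps_mulDr f g h : fps_mul f (fps_add g h) = fps_add (fps_mul f g) (fps_mul f h).
Proof.
apply: functional_extensionality => n.
by rewrite /fps_mul /fps_add -big_split; apply: eq_bigr => i _; rewrite mulrDr.
Qed.

Lemma fps_mulZr c f g : fps_mul f (fps_scale c g) = fps_scale c (fps_mul f g).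
Proof.
apply: functional_extensionality => n.
by rewrite /fps_mul /fps_scale mulr_sumr; apply: eq_bigr => i _; rewrite mulrCA.
Qed.

Lemma fps_mulZl c f g : fps_mul (fps_scale c f) g = fps_scale c (fps_mul f g).
Proof. by rewrite fps_mulC fps_mulZr fps_mulC. Qed.

Lemma fps_mul_sumr (I : Type) (r : seq I) (P : pred I) (F : I -> fps) f :
  fps_mul f (fun n => \sum_(i <- r | P i) F i n) =
  (fun n => \sum_(i <- r | P i) fps_mul f (F i) n).
Proof.
apply: functional_extensionality => n.
rewrite /fps_mul exchange_big /=; apply: eq_bigr => j _.
by rewrite mulr_sumr.
Qed.

Lemma size_inv_list f n : size (fps_inv_list f n) = n.+1.
Proof. by elim: n => [|n IH] //=; rewrite size_rcons IH. Qed.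

Lemma inv_list_nth f n i : (i <= n)%N -> nth 0 (fps_inv_list f n) i = fps_inv f i.
Proof.
elim: n => [|n IH] hi.
  by move: hi; rewrite leqn0 => /eqP ->.
rewrite /= nth_rcons size_inv_list.
have [hlt|hge] := ltnP i n.+1; first by rewrite IH.
have ? : i = n.+1 by apply/eqP; rewrite eqn_leq hi hge.
subst i. rewrite eqxx. by rewrite /fps_inv /= nth_rcons size_inv_list ltnn eqxx.
Qed.

Lemma fps_invS f n : fps_inv f n.+1 =
  - (f 0%N)^-1 * \sum_(i < n.+1) f i.+1 * fps_inv f (n - i)%N.
Proof.
rewrite /fps_inv /= nth_rcons size_inv_list ltnn eqxx.
congr (_ * _); apply: eq_bigr => i _; rewrite inv_list_nth //; lia.
Qed.

Lemma fps_invK f : f 0%N != 0 -> fps_mul f (fps_inv f) = fps_one.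
Proof.
move=> h0; apply: functional_extensionality => n.
case: n => [|n].
  by rewrite /fps_mul big_ord1 /fps_inv /= mulfV.
rewrite /fps_mul big_ord_recl /= subn0 fps_invS mulrA mulrN mulfV // mulN1r.
rewrite addrC; apply/eqP; rewrite subr_eq0; apply/eqP.
by apply: eq_bigr => i _; rewrite subSS.
Qed.

Lemma natf_neq0 (m : nat) : (0 < m)%N -> (m%:R : rat) != 0.
Proof. by move=> h; rewrite pnatr_eq0 -lt0n. Qed.

Lemma fact_neq0 (m : nat) : ((m`!)%:R : rat) != 0.
Proof. exact/natf_neq0/fact_gt0. Qed.

Lemma expx_mul a b : fps_mul (fps_expx a) (fps_expx b) = fps_expx (a + b).
Proof.
apply: functional_extensionality => n.
rewrite /fps_mul /fps_expx addrC exprDn mulr_suml; apply: eq_bigr => i _.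
have hi : (i <= n)%N by rewrite -ltnS.
have hb := bin_fact hi.
have hb' : ('C(n, i))%:R * ((i`!)%:R * ((n - i)`!)%:R) = (n`!)%:R :> rat
  by rewrite -!natrM hb.
rewrite -mulr_natr -hb'.
have h1 := fact_neq0 i; have h2 := fact_neq0 (n - i).
have h3 : (('C(n, i))%:R : rat) != 0 by apply: natf_neq0; rewrite bin_gt0.
field; rewrite h1 h2 h3 //.
Qed.

Lemma expt_plus1E : fps_expt_plus1 = fps_add (fps_expx 1) fps_one.
Proof.
apply: functional_extensionality => n; rewrite /fps_add /fps_expx.
case: n => [|n] /=; first by rewrite expr0 divr1.
by rewrite expr1n addr0.
Qed.

Lemma expx0 : fps_expx 0 = fps_one.
Proof.
apply: functional_extensionality => n; rewrite /fps_expx.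
by case: n => [|n] /=; rewrite ?expr0 ?divr1 // expr0n mul0r.
Qed.

Definition Ssum (x : nat) : fps :=
  fun n => \sum_(i < x) fps_scale ((-1) ^+ i) (fps_expx i%:R) n.

Lemma ES x : fps_mul fps_expt_plus1 (Ssum x) =
  fun n => fps_expx 0 n - (-1) ^+ x * fps_expx x%:R n.
Proof.
rewrite /Ssum fps_mul_sumr; apply: functional_extensionality => n.
have -> : \sum_(i < x) fps_mul fps_expt_plus1 (fps_scale ((-1) ^+ i) (fps_expx i%:R)) n
  = \sum_(i < x) (-1) ^+ i * (fps_expx i.+1%:R n + fps_expx i%:R n).
  apply: eq_bigr => i _.
  rewrite fps_mulZr fps_mulC expt_plus1E fps_mulDr expx_mul fps_mulC fps_mul1.
  by rewrite /fps_scale /fps_add -natr1 addrC.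
elim: x => [|x IH]; first by rewrite big_ord0 expr0 mul1r subrr.
rewrite big_ord_recr /= IH exprS; ring.
Qed.

Lemma gf_combine k x : (0 < x)%N ->
  fps_add (fps_scale ((-1) ^+ (x - 1)%N) (polyGenocchi_gf k x%:R)) (polyGenocchi_gf k 0)
  = fps_mul (fps_scale 2 (Ei_log1p k)) (Ssum x).
Proof.
move=> hx.
set A := fps_scale 2 (Ei_log1p k).
have hs : (-1) ^+ (x - 1)%N = - (-1) ^+ x :> rat.
  by case: x hx => // x _; rewrite exprS subSS subn0 mulN1r opprK.
have -> : fps_add (fps_scale ((-1) ^+ (x - 1)%N) (polyGenocchi_gf k x%:R)) (polyGenocchi_gf k 0)
  = fps_mul (fps_mul A (fps_inv fps_expt_plus1)) (fps_mul fps_expt_plus1 (Ssum x)).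
  rewrite ES /polyGenocchi_gf -/A.
  have -> : (fun n => fps_expx 0 n - (-1) ^+ x * fps_expx x%:R n)
     = fps_add (fps_scale ((-1) ^+ (x - 1)%N) (fps_expx x%:R)) (fps_expx 0).
    apply: functional_extensionality => n; rewrite /fps_add /fps_scale hs.
    by rewrite mulNr addrC.
  by rewrite fps_mulDr fps_mulZr.
rewrite -fps_mulA (fps_mulA (fps_inv _)) (fps_mulC (fps_inv _)) fps_invK.
  by rewrite fps_mul1.
by [].
Qed.

Lemma key k x n :
  (n`!)%:R * fps_mul (Ei_log1p k) (Ssum x) n =
  \sum_(1 <= m < n.+1) \sum_(1 <= j < m.+1) \sum_(0 <= i < x)
      (-1) ^+ i * (i%:R : rat) ^+ (n - m)%N * ('C(n, m))%:R
      * (stirling1 m j / (j%:R : rat) ^ (k - 1)).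
Proof.
rewrite /fps_mul mulr_sumr.
rewrite (_ : \sum_(i < n.+1) _ = \sum_(0 <= m < n.+1) (n`!)%:R * (Ei_log1p k m * Ssum x (n - m)%N)); last by rewrite big_mkord.
rewrite big_ltn // {1}/Ei_log1p big_ord1 /= !mul0r mulr0 add0r.
apply: eq_big_nat => m /andP [hm1 hmn].
have hm : (m <= n)%N by rewrite -ltnS.
rewrite /Ei_log1p.
rewrite (_ : \sum_(j < m.+1) _ = \sum_(0 <= j < m.+1) Ei_coef k j * fps_pow fps_log1p j m); last by rewrite big_mkord.
rewrite [X in _ * (X * _) = _]big_ltn ?ltnS // /= mul0r add0r mulr_suml mulr_sumr.
apply: eq_big_nat => j /andP [hj1 hjm].
rewrite /Ssum big_mkord mulr_sumr mulr_sumr; apply: eq_bigr => i _.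
rewrite /fps_scale /fps_expx /stirling1.
case: j hj1 hjm => // j _ hjm.
rewrite /Ei_coef.
set y := (j.+1%:R : rat) ^ (k - 1).
have hy : y != 0 by apply: expfz_neq0; apply: natf_neq0.
have -> : (j.+1%:R : rat) ^ k = y * j.+1%:R.
  by rewrite -{1}(subrK 1 k) expfzDr ?natf_neq0 // expr1z.
rewrite factS natrM /=.
have hb' : ('C(n, m))%:R * ((m`!)%:R * ((n - m)`!)%:R) = (n`!)%:R :> rat
  by rewrite -!natrM bin_fact.
rewrite -hb'.
have h1 := fact_neq0 m; have h2 := fact_neq0 (n - m); have h4 := fact_neq0 j.
have h3 : ((j.+1)%:R : rat) != 0 by apply: natf_neq0.
field; by rewrite hy h4 h2 addrC natr1 h3.
Qed.

Theorem theorem4 (k : int) (x n : nat) (hx : (0 < x)%N) (hn : (0 < n)%N) :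
  (-1) ^+ (x - 1)%N * polyGenocchi k n x%:R + polyGenocchi k n 0 =
  2 * \sum_(1 <= m < n.+1) \sum_(1 <= j < m.+1) \sum_(0 <= i < x)
      (-1) ^+ i * (i%:R : rat) ^+ (n - m)%N * ('C(n, m))%:R
      * (stirling1 m j / (j%:R : rat) ^ (k - 1)).
Proof.
rewrite -key.
have := congr1 (fun f => f n) (gf_combine k hx).
rewrite fps_mulZl /fps_add /fps_scale /polyGenocchi => h.
rewrite [RHS]mulrCA -h; ring.
Qed.
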